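(* Let $r\in\{3,5\}$, let $D=\mathrm{D}_{2r}$ be the dihedral group of order $2r$, and let $S\subseteq D$ with $S=S^{-1}$. Then there exists a nontrivial automorphism $\beta$ of $D$ that fixes $S$ setwise and inverts every element of the subgroup of order $r$ of $D$. *)

(* Defs.v *)
From mathcomp Require Import all_boot all_fingroup all_solvable.
Set Implicit Arguments. Unset Strict Implicit. Unset Printing Implicit Defensive.

(* Main.v *)
Require Import Defs.
From mathcomp Require Import all_boot all_fingroup all_solvable.
From mathcomp Require Import zify.

Lemma comb r (hr : (r == 3) || (r == 5)) (P : nat -> bool) :
  exists j, forall i, i < r -> P i = P ((j + j + r - i) %% r).
Proof.
case/orP: hr => /eqP ->.
- case E0: (P 0); case E1: (P 1); case E2: (P 2);
  first [ exists 0%N; move=> i; do 3?[case: i => [|i]; [move=> _; vm_compute; congruence|]]; done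
        | exists 1%N; move=> i; do 3?[case: i => [|i]; [move=> _; vm_compute; congruence|]]; done
        | exists 2%N; move=> i; do 3?[case: i => [|i]; [move=> _; vm_compute; congruence|]]; done ].
- case E0: (P 0); case E1: (P 1); case E2: (P 2); case E3: (P 3); case E4: (P 4);
  first [ exists 0%N; move=> i; do 5?[case: i => [|i]; [move=> _; vm_compute; congruence|]]; done
        | exists 1%N; move=> i; do 5?[case: i => [|i]; [move=> _; vm_compute; congruence|]]; done
        | exists 2%N; move=> i; do 5?[case: i => [|i]; [move=> _; vm_compute; congruence|]]; done
        | exists 3%N; move=> i; do 5?[case: i => [|i]; [move=> _; vm_compute; congruence|]]; done
        | exists 4%N; move=> i; do 5?[case: i => [|i]; [move=> _; vm_compute; congruence|]]; done ].
Qed.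

Set Implicit Arguments.
Local Open Scope group_scope.

Section G.
Variables (gT : finGroupType) (r : nat) (x y : gT).
Hypothesis hr : (r == 3) || (r == 5).
Hypothesis defG : <[x]> <*> <[y]> = [set: gT].
Hypothesis xr : x ^+ r = 1.
Hypothesis y2 : y ^+ 2 = 1.
Hypothesis xy : x ^ y = x^-1.
Hypothesis cardG : #|[set: gT]| = (2 * r)%N.

Let H := <[x]>.

Lemma r_prime : prime r. Proof. by case/orP: hr => /eqP ->. Qed.
Lemma r_odd : odd r. Proof. by case/orP: hr => /eqP ->. Qed.
Lemma r_gt2 : (2 < r)%N. Proof. by case/orP: hr => /eqP ->. Qed.

Lemma yy : y * y = 1.
Proof. by rewrite -y2 expgS expg1. Qed.

Lemma yV : y^-1 = y.
Proof. by apply/eqP; rewrite eq_invg_mul yy. Qed.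

Lemma yN : y \notin H.
Proof.
apply/negP => yH.
have : #|[set: gT]| = #|H|.
  by rewrite -defG; congr #|pred_of_set _|; apply/joing_idPl; rewrite cycle_subG.
rewrite cardG -orderE.
have : (#[x] %| r)%N by rewrite order_dvdn xr.
move=> /dvdn_leq; have := r_gt2; lia.
Qed.

Lemma ox : #[x] = r.
Proof.
have : (#[x] %| r)%N by rewrite order_dvdn xr.
case/primeP: r_prime => _ h /h /orP[/eqP o1|/eqP //].
move/eqP: o1; rewrite order_eq1 => /eqP x1.
have : #|[set: gT]| <= 2.
  rewrite -defG x1 cycle1 joing1G -orderE.
  by apply: dvdn_leq => //; rewrite order_dvdn y2.
rewrite cardG; have := r_gt2; lia.
Qed.

Lemma inv_y a : a \in H -> a ^ y = a^-1.
Proof. by case/cycleP=> i ->; rewrite conjXg xy expVgn. Qed.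

Lemma ya a : a \in H -> y * a = a^-1 * y.
Proof. by move=> aH; rewrite [RHS]conjgC inv_y ?groupV // invgK. Qed.

Lemma Hcomm a c : a \in H -> c \in H -> a * c = c * a.
Proof. by move=> aH cH; apply: (centsP (cycle_abelian x)). Qed.

Lemma decomp g : exists2 a, a \in H & (g = a \/ g = a * y).
Proof.
have : g \in <[x]> <*> <[y]> by rewrite defG inE.
rewrite norm_joinEr; last by rewrite norms_cycle xy groupV cycle_id.
case/mulsgP=> a w aH /cycleP[k ->] ->; exists a => //.
rewrite -(expg_mod_order y k).
have : (#[y] %| 2)%N by rewrite order_dvdn y2.
case/primeP: (pdiv_prime (isT : 1 < 2)%N) => _ h.
move/(h _)=> /orP[/eqP ->|/eqP ->]; first by left; rewrite modn1 mulg1.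
rewrite modn2; case: (odd k) => /=; [right; rewrite expg1|left; rewrite mulg1] => //.
Qed.


Lemma conj_z a c : a \in H -> c \in H -> a ^ (c * y) = a^-1.
Proof.
move=> aH cH; rewrite conjgM [a ^ c]conjgE (Hcomm aH cH) mulKg inv_y //.
Qed.

Lemma yyy : y ^ y = y.
Proof. by rewrite conjgE yy mulg1 yV. Qed.

Lemma conj_zy a c : a \in H -> c \in H -> (a * y) ^ (c * y) = c * c * a^-1 * y.
Proof.
move=> aH cH; rewrite conjMg conj_z // conjgM [y ^ c]conjgE ya // !conjMg yyy.
rewrite !inv_y ?groupV // invgK !mulgA; congr (_ * y).
rewrite -mulgA (Hcomm (groupVr aH) (groupM cH cH)) //.
Qed.

Lemma xsub j k : (k < r)%N -> x ^+ j * x ^+ j * (x ^+ k)^-1 = x ^+ ((j + j + r - k) %% r).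
Proof.
move=> kr; rewrite -{2}ox expg_mod_order -addnBA ?(ltnW kr) // !expgD.
congr (_ * _); apply/eqP; rewrite eq_invg_mul -expgD subnKC ?xr //; exact: ltnW.
Qed.

Lemma keyc (S : {set gT}) : exists2 c, c \in H &
  forall a, a \in H -> (a * y \in S) = (c * c * a^-1 * y \in S).
Proof.
have [j hj] := @comb r hr (fun i => x ^+ i * y \in S).
exists (x ^+ j); first exact: mem_cycle.
move=> a /cycleP[i ->]; rewrite -(expg_mod_order x i) ox.
have ir : (i %% r < r)%N by rewrite ltn_mod; have := r_gt2; lia.
by rewrite xsub // hj.
Qed.

Lemma general (S : {set gT}) (hS : S^-1 = S) :
  exists2 beta : {perm gT}, beta \in Aut [set: gT] &
    [/\ beta != 1, beta @: S = S &
        forall K : {group gT}, #|K| = r ->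
          forall g, g \in K -> beta g = g^-1].
Proof.
have [c cH hc] := keyc S.
set z := c * y.
have bE g : conj_aut [set: gT] z g = g ^ z by rewrite conj_autE ?inE.
exists (conj_aut [set: gT] z); first exact: Aut_aut.
split.
- apply/eqP => b1; have := bE x; rewrite b1 perm1 conj_z ?cycle_id // => e.
  have : (#[x] %| 2)%N by rewrite order_dvdn expgS expg1 {2}e mulgV.
  rewrite ox => /dvdn_leq; have := r_gt2; lia.
- apply/eqP; rewrite eqEcard card_imset ?leqnn ?andbT; last exact: perm_inj.
  apply/subsetP => _ /imsetP[s sS ->]; rewrite bE.
  have [a aH [ea|ea]] := decomp s; subst s.
  + by rewrite conj_z // -mem_invg hS.
  + by rewrite conj_zy // -hc.
- move=> K oK g gK; rewrite bE.
  have [a aH [ea|ea]] := decomp g; subst g; first by rewrite conj_z.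
  exfalso.
  have o2 : (#[a * y] %| 2)%N.
    by rewrite order_dvdn expgS expg1 mulgA -(mulgA a) ya // mulgA mulgV mul1g yy.
  have oK' : (#[a * y] %| r)%N by rewrite -oK order_dvdG.
  have o1 : #[a * y] = 1%N.
    have : (#[a * y] %| gcdn 2 r)%N by rewrite dvdn_gcd o2 oK'.
    have -> : gcdn 2 r = 1%N by case/orP: hr => /eqP ->.
    by rewrite dvdn1 => /eqP.
  move/eqP: o1; rewrite order_eq1 => /eqP ay1.
  have : y = a^-1 by rewrite -[y]mul1g -(mulVg a) -mulgA ay1 mulg1.
  by move=> ey; move: yN; rewrite ey groupV aH.
Qed.

End G.

Unset Implicit Arguments.

Theorem lemma4p9 (r : nat) (hr : (r == 3) || (r == 5))
    (S : {set 'D_(2 * r)}) (hS : S^-1 = S) :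
  exists2 beta : {perm 'D_(2 * r)}, beta \in Aut 'D_(2 * r) &
    [/\ beta != 1, beta @: S = S &
        forall H : {group 'D_(2 * r)}, #|H| = r ->
          forall x, x \in H -> beta x = x^-1].
Proof.
have r1 : (1 < r)%N by case/orP: hr => /eqP ->.
move: S hS; rewrite mul2n => S hS.
have := isoGrp_hom (Grp_dihedral r1); case/existsP=> -[x y] /= /eqP[defG xr y2 xy].
have cG : #|[set: 'D_r.*2]| = (2 * r)%N by rewrite card_dihedral // mul2n.
exact: (general r hr defG xr y2 xy cG hS).

Qed.
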